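(* The generating function $$G_{(231,312)}(x,p,q,y,z)=\sum_{n\ge 0}\ \sum_{\pi\in S_n(231,312)} x^n p^{\operatorname{asc}(\pi)} q^{\operatorname{des}(\pi)} y^{\operatorname{MNA}(\pi)} z^{\operatorname{MND}(\pi)}$$ is equal to $$\frac{1 + x + p x^2 y - p^2 x^2 y + q x^2 z - q^2 x^2 z - p q x^2 y z + p q x^3 y z - p^2 q x^3 y z - p q^2 x^3 y z}{1 - p^2 x^2 y - q^2 x^2 z - p q x^2 y z - p^2 q x^3 y z - p q^2 x^3 y z}.$$
   Context: For $n\ge 0$, $S_n$ denotes the set of permutations $\pi=\pi_1\pi_2\cdots\pi_n$ of $[n]=\{1,\dots,n\}$ ($S_0$ consists of the empty permutation, for which all statistics below are $0$). A permutation $\pi\in S_n$ avoids a pattern $\tau\in S_k$ if there are no indices $i_1<\dots<i_k$ such that $\pi_{i_a}<\pi_{i_b}$ if and only if $\tau_a<\tau_b$; $S_n(\tau,\rho)$ is the set of permutations in $S_n$ avoiding both $\tau$ and $\rho$. $\operatorname{asc}(\pi)$ (resp. $\operatorname{des}(\pi)$) is the number of $i\in[n-1]$ with $\pi_i<\pi_{i+1}$ (resp. $\pi_i>\pi_{i+1}$). $\operatorname{MNA}(\pi)$ is the maximum size of a set $I\subseteq[n-1]$ such that $\pi_i<\pi_{i+1}$ for all $i\in I$ and $|i-j|\ge 2$ for distinct $i,j\in I$; $\operatorname{MND}(\pi)$ is defined analogously with $\pi_i>\pi_{i+1}$. *)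

(* Defs.v *)
From HB Require Import structures.
From mathcomp Require Import all_boot all_order all_algebra all_fingroup.
Set Implicit Arguments. Unset Strict Implicit. Unset Printing Implicit Defensive.
Import Order.TTheory GRing.Theory Num.Theory.

(* A permutation of [n] is represented by s : 'S_n (values 0..n-1, positions
   0..n-1); its one-line notation is the sequence of values. *)
Definition oneline (n : nat) (s : 'S_n) : seq nat :=
  [seq val (s i) | i <- enum 'I_n].

Definition avoids (n : nat) (s : 'S_n) (tau : seq nat) : bool :=
  ~~ [exists f : {ffun 'I_(size tau) -> 'I_n},
        [forall a : 'I_(size tau), forall b : 'I_(size tau),
           ((a < b) ==> (f a < f b)) &&
           ((s (f a) < s (f b)) == (nth 0 tau a < nth 0 tau b))]].

(* 0-based: position i (with i.+1 < n) is an ascent if s_i < s_{i+1} *)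
Definition is_asc (n : nat) (s : 'S_n) (i : nat) : bool :=
  (i.+1 < n) && (nth 0 (oneline s) i < nth 0 (oneline s) i.+1).
Definition is_des (n : nat) (s : 'S_n) (i : nat) : bool :=
  (i.+1 < n) && (nth 0 (oneline s) i.+1 < nth 0 (oneline s) i).

Definition asc (n : nat) (s : 'S_n) : nat := count (is_asc s) (iota 0 n).
Definition des (n : nat) (s : 'S_n) : nat := count (is_des s) (iota 0 n).

Definition nonadj (n : nat) (I : {set 'I_n}) : bool :=
  [forall i in I, forall j in I, (i != j) ==> ((i.+1 < j) || (j.+1 < i))].

Definition MNA (n : nat) (s : 'S_n) : nat :=
  \max_(I : {set 'I_n} | [forall i in I, is_asc s i] && nonadj I) #|I|.
Definition MND (n : nat) (s : 'S_n) : nat :=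
  \max_(I : {set 'I_n} | [forall i in I, is_des s i] && nonadj I) #|I|.

Local Open Scope ring_scope.

(* coefficient of x^n in G_{(231,312)}(x,p,q,y,z) *)
Definition Gcoef (R : comNzRingType) (p q y z : R) (n : nat) : R :=
  \sum_(s : 'S_n | avoids s [:: 2; 3; 1]%N && avoids s [:: 3; 1; 2]%N)
     p ^+ asc s * q ^+ des s * y ^+ MNA s * z ^+ MND s.

Definition Gnum (R : comNzRingType) (p q y z : R) : {poly R} :=
  let P := p%:P in let Q := q%:P in let Y := y%:P in let Z := z%:P in
  let x := 'X in
  1 + x + P * x^+2 * Y - P^+2 * x^+2 * Y + Q * x^+2 * Z - Q^+2 * x^+2 * Z
    - P * Q * x^+2 * Y * Z + P * Q * x^+3 * Y * Z - P^+2 * Q * x^+3 * Y * Z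
    - P * Q^+2 * x^+3 * Y * Z.

Definition Gden (R : comNzRingType) (p q y z : R) : {poly R} :=
  let P := p%:P in let Q := q%:P in let Y := y%:P in let Z := z%:P in
  let x := 'X in
  1 - P^+2 * x^+2 * Y - Q^+2 * x^+2 * Z - P * Q * x^+2 * Y * Z
    - P^+2 * Q * x^+3 * Y * Z - P * Q^+2 * x^+3 * Y * Z.

(* Main.v *)
Require Import Defs.
From HB Require Import structures.
From mathcomp Require Import all_boot all_order all_algebra all_fingroup.
From mathcomp Require Import zify ring.
Set Implicit Arguments. Unset Strict Implicit. Unset Printing Implicit Defensive.
Import Order.TTheory GRing.Theory Num.Theory.

Lemma card_count (n : nat) (f : 'I_n -> bool) : #|[set i | f i]| = count f (enum 'I_n).
Proof. rewrite cardsE cardE /enum_mem size_filter; rewrite (_ : filter _ _ = Finite.enum _); last by apply/all_filterP/allP. by []. Qed.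

Lemma card_nth (n : nat) (g : seq bool) : size g = n ->
  #|[set i : 'I_n | nth false g i]| = count id g.
Proof.
move=> Hs; rewrite card_count -(count_map val (nth false g)) val_enum_ord.
by rewrite -[X in count id X](mkseq_nth false g) Hs /mkseq count_map.
Qed.

Lemma card_lt (n m : nat) : m <= n -> #|[set v : 'I_n | v < m]| = m.
Proof.
move=> Hm.
have -> : [set v : 'I_n | v < m] = widen_ord Hm @: [set: 'I_m].
  apply/setP => v; rewrite inE; apply/idP/imsetP => [Hv|[w _ ->]] /=; last exact: ltn_ord.
  by exists (Ordinal Hv); [rewrite inE | apply: val_inj].
rewrite card_imset; first by rewrite cardsT card_ord.
move=> a b /(congr1 val) /= E; exact: val_inj.
Qed.

Lemma perm_rank (n : nat) (s : 'S_n) (i : 'I_n) : val (s i) = #|[set j | s j < s i]|.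
Proof.
have -> : [set j | s j < s i] = s @^-1: [set v : 'I_n | v < s i].
  by apply/setP => j; rewrite !inE.
rewrite card_preimset; last exact: perm_inj.
by rewrite card_lt // ltnW.
Qed.

Lemma perm_eq_order (n : nat) (s t : 'S_n) :
  (forall i j, (s i < s j) = (t i < t j)) -> s = t.
Proof.
move=> H; apply/permP => i; apply: val_inj.
rewrite (perm_rank s i) (perm_rank t i).
suff -> : [set j | s j < s i] = [set j | t j < t i] by [].
by apply/setP => j; rewrite !inE H.
Qed.

Fixpoint mna (l : seq bool) : nat :=
  match l with
  | [::] => 0
  | false :: l' => mna l'
  | true :: [::] => 1
  | true :: _ :: l'' => (mna l'').+1
  end.

Fixpoint gr (l : seq bool) : seq bool :=
  match l with
  | [::] => [::]
  | false :: l' => false :: gr l'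
  | true :: [::] => [:: true]
  | true :: _ :: l'' => true :: false :: gr l''
  end.

Fixpoint mna_ind (P : seq bool -> Prop) (H0 : P [::])
  (Hf : forall l, P l -> P (false :: l)) (H1 : P [:: true])
  (Ht : forall x l, P l -> P (true :: x :: l)) (l : seq bool) {struct l} : P l :=
  match l with
  | [::] => H0
  | false :: l' => Hf l' (mna_ind H0 Hf H1 Ht l')
  | true :: [::] => H1
  | true :: x :: l'' => Ht x l'' (mna_ind H0 Hf H1 Ht l'')
  end.

Lemma mna_true l : mna (true :: l) = (mna (behead l)).+1.
Proof. by case: l. Qed.

Lemma mna_mono l : mna (behead l) <= mna l /\ mna l <= (mna (behead l)).+1.
Proof.
elim: l => [|b l [IH1 IH2]] //; case: b; rewrite ?mna_true /=; split => //.
Qed.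

Lemma mna_cat_false l : mna (l ++ [:: false]) = mna l.
Proof. by elim/mna_ind: l => [|l IH|| x l IH] //=; rewrite ?IH. Qed.

Lemma size_gr l : size (gr l) = size l.
Proof. by elim/mna_ind: l => [|l IH|| x l IH] //=; rewrite ?IH. Qed.

Lemma count_gr l : count id (gr l) = mna l.
Proof. by elim/mna_ind: l => [|l IH|| x l IH] //=; rewrite ?IH. Qed.

Lemma gr_sub l i : nth false (gr l) i -> nth false l i.
Proof.
elim/mna_ind: l i => [|l IH|| x l IH] [|[|i]] //=; try exact: IH.
Qed.

Lemma gr_nadj l i : nth false (gr l) i -> ~~ nth false (gr l) i.+1.
Proof.
elim/mna_ind: l i => [|l IH|| x l IH] [|[|i]] //=; try exact: IH.
Qed.

Lemma mna_ub (l j : seq bool) : size j = size l ->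
  (forall i, nth false j i -> nth false l i) ->
  (forall i, nth false j i -> ~~ nth false j i.+1) -> count id j <= mna l.
Proof.
have [N] := ubnP (size l); elim: N l j => // N IH l j Hl Hs Hsub Hna.
case: l Hl Hs Hsub Hna => [|b l] Hl; first by case: j.
case: j => [|y j] //= [Hs] Hsub Hna.
have IHs : forall j', size j' = size l ->
    (forall i, nth false j' i -> nth false l i) ->
    (forall i, nth false j' i -> ~~ nth false j' i.+1) -> count id j' <= mna l.
  by move=> j' ? ? ?; apply: IH => //.
have Hsub' : forall i, nth false j i -> nth false l i by move=> i; exact: (Hsub i.+1).
have Hna' : forall i, nth false j i -> ~~ nth false j i.+1 by move=> i; exact: (Hna i.+1).
case: b Hl Hsub => Hl Hsub; last first.
  have Ey : y = false by apply/negbTE/negP => Hy; have := Hsub 0 Hy.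
  by rewrite Ey add0n; exact: IHs.
case: y Hsub Hna => Hsub Hna; last first.
  rewrite add0n; apply: (leq_trans (IHs j Hs Hsub' Hna')).
  by have [] := mna_mono (true :: l).
have Hj0 := Hna 0 isT.
case: l j Hl Hs Hsub Hsub' Hna Hna' Hj0 IHs => [|x l] [|y' j] //= Hl [Hs] Hsub Hsub' Hna Hna' Hj0 IHs.
rewrite (negbTE Hj0) add1n add0n ltnS; apply: IH => //.
- lia.
- by move=> i; exact: (Hsub' i.+1).
- by move=> i; exact: (Hna' i.+1).
Qed.

Definition Mx n (P : nat -> bool) : nat :=
  \max_(I : {set 'I_n} | [forall i in I, P i] && nonadj I) #|I|.

Lemma nth_mapiota n (P : nat -> bool) i :
  nth false [seq P k | k <- iota 0 n] i = (i < n) && P i.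
Proof.
case: (ltnP i n) => Hi.
  by rewrite (nth_map 0) ?size_iota // nth_iota.
by rewrite nth_default // size_map size_iota.
Qed.

Lemma Mx_mna n P : Mx n P = mna [seq P k | k <- iota 0 n].
Proof.
apply/eqP; rewrite eqn_leq; apply/andP; split.
- apply/bigmax_leqP => I /andP [/forallP HP /forallP Hna].
  pose g := fun i => [exists k : 'I_n, (val k == i) && (k \in I)].
  have Hg : forall i, nth false (mkseq g n) i = (i < n) && g i.
    by move=> i; rewrite /mkseq nth_mapiota.
  have HgI : forall k : 'I_n, g k = (k \in I).
    move=> k; apply/existsP/idP => [[k' /andP [/eqP /val_inj -> //]] | Hk].
    by exists k; rewrite eqxx.
  have -> : #|I| = count id (mkseq g n).
    rewrite /mkseq count_map -val_enum_ord count_map -card_count.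
    by apply: eq_card => k; rewrite inE /= HgI.
  apply: mna_ub.
  + by rewrite size_mkseq size_map size_iota.
  + move=> i; rewrite Hg nth_mapiota => /andP [Hi /existsP [k /andP [/eqP Ek Hk]]].
    by rewrite Hi /= -Ek; have := HP k; rewrite Hk.
  + move=> i; rewrite !Hg => /andP [Hi /existsP [k /andP [/eqP Ek Hk]]].
    apply/negP => /andP [Hi1 /existsP [k' /andP [/eqP Ek' Hk']]].
    have := Hna k; rewrite Hk => /forallP /(_ k'); rewrite Hk' /=.
    have -> : k != k' by apply/eqP => E; move: Ek'; rewrite -E Ek; lia.
    rewrite Ek Ek' /=; lia.
- set l := [seq P k | k <- iota 0 n].
  have Hsl : size l = n by rewrite size_map size_iota.
  pose I0 := [set i : 'I_n | nth false (gr l) i].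
  have <- : #|I0| = mna l by rewrite card_nth ?size_gr // count_gr.
  apply: leq_bigmax_cond; apply/andP; split.
  + apply/forallP => i; apply/implyP; rewrite inE => /gr_sub.
    by rewrite nth_mapiota => /andP [].
  + apply/forallP => i; apply/implyP; rewrite inE => Hi.
    apply/forallP => j; apply/implyP; rewrite inE => Hj.
    apply/implyP => Hij.
    case: (ltnP i.+1 j) => //= H1; case: (ltnP j.+1 i) => //= H2.
    have [E|E] : j = i.+1 :> nat \/ i = j.+1 :> nat.
      have : nat_of_ord i != nat_of_ord j by [].
      move/eqP. 
      lia.
    * by move: (gr_nadj Hi); rewrite -E Hj.
    * by move: (gr_nadj Hj); rewrite -E Hi.
Qed.

Section Lay.
Variable b : seq bool.
Local Notation bb k := (nth false b k).

Definition en i := i + find negb (drop i b).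
Definition st i := i - find negb (rev (take i b)).
Definition lay i := st i + en i - i.

Lemma en_ge i : i <= en i. Proof. exact: leq_addr. Qed.

Lemma en_true i k : i <= k -> k < en i -> bb k.
Proof.
move=> H1 H2; have E : k = i + (k - i) by lia.
have H3 : k - i < find negb (drop i b) by rewrite /en in H2; lia.
by have := before_find false H3; rewrite nth_drop -E => /negbFE.
Qed.

Lemma en_false i : bb (en i) = false.
Proof.
rewrite /en -nth_drop; case: (boolP (has negb (drop i b))) => H.
  by have := nth_find false H => /negbTE.
by rewrite hasNfind // nth_default.
Qed.

Lemma en_le i : i <= size b -> en i <= size b.
Proof. move=> H; have := find_size negb (drop i b); rewrite size_drop /en; lia. Qed.

Lemma st_le i : st i <= i. Proof. exact: leq_subr. Qed.

Lemma st_true i k : i <= size b -> st i <= k -> k < i -> bb k.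
Proof.
move=> Hi H1 H2.
have Hs : size (rev (take i b)) = i by rewrite size_rev size_take_min; lia.
have H3 : i - k.+1 < find negb (rev (take i b)) by rewrite /st in H1; have := find_size negb (rev (take i b)); lia.
have := before_find false H3; rewrite nth_rev; last by move: Hs; rewrite size_rev => ->; lia.
rewrite size_take_min (_ : minn i (size b) = i); last by lia.
rewrite (_ : i - (i - k.+1).+1 = k); last by lia.
by rewrite nth_take // => /negbFE.
Qed.

Lemma st_false i : i <= size b -> 0 < st i -> bb (st i).-1 = false.
Proof.
move=> Hi H1.
have Hs : size (rev (take i b)) = i by rewrite size_rev size_take_min; lia.
have Hf : find negb (rev (take i b)) < size (rev (take i b)) by rewrite Hs; rewrite /st in H1; lia.
rewrite -has_find in Hf; have := nth_find false Hf.
rewrite nth_rev; last by move: Hf; rewrite has_find size_rev.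
rewrite size_take_min (_ : minn i (size b) = i); last by lia.
have Hf' := Hf; rewrite has_find Hs in Hf'.
rewrite (_ : i - (find negb (rev (take i b))).+1 = (st i).-1); last by rewrite /st; lia.
by rewrite nth_take; [move/negbTE | rewrite /st; lia].
Qed.

Lemma en_uniq i e : i <= e -> (forall k, i <= k -> k < e -> bb k) -> bb e = false -> en i = e.
Proof.
move=> H1 H2 H3; case: (ltngtP (en i) e) => // H.
- by have := H2 _ (en_ge i) H; rewrite en_false.
- by have := en_true H1 H; rewrite H3.
Qed.

Lemma st_uniq i s0 : i <= size b -> s0 <= i -> (forall k, s0 <= k -> k < i -> bb k) ->
  (s0 = 0 \/ bb s0.-1 = false) -> st i = s0.
Proof.
move=> Hi H1 H2 H3; case: (ltngtP (st i) s0) => // H.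
- have Hs0 : 0 < s0 by lia.
  case: H3 => [E|H3]; first by lia.
  by have := st_true (k := s0.-1) Hi (ltac:(lia)) (ltac:(lia)); rewrite H3.
- have Hst : 0 < st i by lia.
  by have := H2 (st i).-1 (ltac:(lia)) (ltac:(have := st_le i; lia)); rewrite st_false.
Qed.

Lemma block i j : i <= size b -> j <= size b -> st i <= j -> j <= en i ->
  en j = en i /\ st j = st i.
Proof.
move=> Hi Hj H1 H2; have Hsi := st_le i; have Hei := en_ge i.
split.
- apply: en_uniq; [exact: H2 | move=> k Hk1 Hk2 | exact: en_false].
  case: (ltnP k i) => Hk; first by apply: (st_true Hi) => //; lia.
  exact: (en_true Hk).
- apply: st_uniq => //.
  + move=> k Hk1 Hk2; case: (ltnP k i) => Hk; first exact: (st_true Hi).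
    by apply: (en_true Hk); lia.
  + case: (posnP (st i)) => H; [by left | right; exact: st_false].
Qed.

Lemma layL i j : i < j -> j <= size b ->
  (lay i < lay j) = (en i < j) /\ (lay j < lay i) = ~~ (en i < j).
Proof.
move=> Hij Hj; have Hsi := st_le i; have Hei := en_ge i.
have Hsj := st_le j; have Hej := en_ge j.
case: (ltnP (en i) j) => H /=.
- have H2 : en i < st j.
    rewrite ltnNge; apply/negP => H3.
    by have := st_true Hj H3 H; rewrite en_false.
  rewrite /lay; split; lia.
- have [E1 E2] := @block i j (ltac:(lia)) Hj (ltac:(lia)) H.
  rewrite /lay E1 E2; split; lia.
Qed.

Lemma lay_inv i : i <= size b -> lay (lay i) = i.
Proof.
move=> Hi; have Hsi := st_le i; have Hei := en_ge i; have Hl := en_le Hi.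
have [E1 E2] := block (j := lay i) Hi (ltac:(rewrite /lay; lia)) (ltac:(rewrite /lay; lia)) (ltac:(rewrite /lay; lia)).
rewrite {1}/lay E1 E2 /lay; lia.
Qed.

Lemma bb_en k : bb k = (k < en k).
Proof.
apply/idP/idP => H.
  rewrite ltn_neqAle en_ge andbT; apply/eqP => E.
  by move: H; rewrite {1}E en_false.
exact: en_true (leqnn k) H.
Qed.

End Lay.

Lemma lay_ltn (n : nat) (t : n.-1.-tuple bool) (i : 'I_n) : lay t i < n.
Proof.
have Hs : size t = n.-1 by rewrite size_tuple.
have Hi := ltn_ord i.
have Hl := @en_le t i (ltac:(lia)).
have := st_le t i; rewrite /lay; lia.
Qed.

Definition layf (n : nat) (t : n.-1.-tuple bool) (i : 'I_n) : 'I_n := Ordinal (lay_ltn t i).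

Lemma layf_inj (n : nat) (t : n.-1.-tuple bool) : injective (layf t).
Proof.
apply: inv_inj => i; apply: val_inj => /=.
have Hs : size t = n.-1 by rewrite size_tuple.
have Hi := ltn_ord i.
by rewrite lay_inv //; lia.
Qed.

Definition layp (n : nat) (t : n.-1.-tuple bool) : 'S_n := perm (@layf_inj n t).

Lemma laypE (n : nat) (t : n.-1.-tuple bool) (i : 'I_n) : val (layp t i) = lay t i.
Proof. by rewrite permE. Qed.

Definition sv (n : nat) (s : 'S_n) (i : nat) : nat := nth 0 (oneline s) i.

Lemma svE (n : nat) (s : 'S_n) (i : 'I_n) : sv s i = s i.
Proof. by rewrite /sv /oneline (nth_map i) ?size_enum_ord // nth_ord_enum. Qed.

Lemma sv_inj (n : nat) (s : 'S_n) x y : x < n -> y < n -> sv s x = sv s y -> x = y.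
Proof.
move=> Hx Hy E.
have E1 := svE s (Ordinal Hx); have E2 := svE s (Ordinal Hy); rewrite /= E E2 in E1.
by have := perm_inj (val_inj E1) => /(congr1 val).
Qed.

Definition Dseq (n : nat) (s : 'S_n) : seq bool := mkseq (fun k => sv s k.+1 < sv s k) n.-1.
Definition Dt (n : nat) (s : 'S_n) : n.-1.-tuple bool :=
  @Tuple n.-1 bool (Dseq s) (introT eqP (size_mkseq _ _)).

Lemma sv_lay (n : nat) (t : n.-1.-tuple bool) x : x < n -> sv (layp t) x = lay t x.
Proof. by move=> Hx; rewrite (svE _ (Ordinal Hx)) laypE. Qed.

Lemma Dt_lay (n : nat) (t : n.-1.-tuple bool) : Dt (layp t) = t.
Proof.
have Hs : size t = n.-1 by rewrite size_tuple.
apply: val_inj => /=; apply: (@eq_from_nth _ false); first by rewrite size_mkseq Hs.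
move=> k; rewrite size_mkseq => Hk; rewrite nth_mkseq // !sv_lay; try lia.
have [_ ->] := @layL t k k.+1 (ltnSn k) (ltac:(lia)).
rewrite (bb_en t k); case: ltngtP; try lia. 
Qed.

Lemma sv_inord (n : nat) (s : 'S_n.+1) x : x < n.+1 -> nat_of_ord (s (inord x)) = sv s x.
Proof. by move=> Hx; rewrite -svE inordK. Qed.

Lemma avoid_rel (n : nat) (s : 'S_n) t0 t1 t2 :
  ~~ avoids s [:: t0; t1; t2] -> exists a b c, [/\ a < b < c, c < n,
     (sv s a < sv s b) = (t0 < t1), (sv s a < sv s c) = (t0 < t2) & (sv s b < sv s c) = (t1 < t2)].
Proof.
rewrite /avoids negbK => /existsP [f /forallP H].
pose o0 : 'I_(size [:: t0; t1; t2]) := @Ordinal 3 0 isT.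
pose o1 : 'I_(size [:: t0; t1; t2]) := @Ordinal 3 1 isT.
pose o2 : 'I_(size [:: t0; t1; t2]) := @Ordinal 3 2 isT.
have G : forall u v : 'I_(size [:: t0; t1; t2]), _ := fun u v => forallP (H u) v.
move: (G o0 o1) (G o0 o2) (G o1 o2) => /= /andP [H01 /eqP E01] /andP [H02 /eqP E02] /andP [H12 /eqP E12].
exists (f o0), (f o1), (f o2); split; rewrite ?svE ?ltn_ord //; exact/andP.
Qed.

Lemma no_pat (n : nat) (s : 'S_n) t0 t1 t2 a b c :
  t0 != t1 -> t0 != t2 -> t1 != t2 ->
  a < b -> b < c -> c < n -> avoids s [:: t0; t1; t2] ->
  (sv s a < sv s b) = (t0 < t1) -> (sv s a < sv s c) = (t0 < t2) -> (sv s b < sv s c) = (t1 < t2) -> False.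
Proof.
case: n s => [|n] s; first by lia.
move=> D01 D02 D12 Hab Hbc Hc /negP Hav E01 E02 E12; apply: Hav.
have Dab : sv s a != sv s b by apply/eqP => /sv_inj; lia.
have Dac : sv s a != sv s c by apply/eqP => /sv_inj; lia.
have Dbc : sv s b != sv s c by apply/eqP => /sv_inj; lia.
apply/existsP; exists [ffun o : 'I_3 => (inord (nth 0 [:: a; b; c] o) : 'I_n.+1)].
apply/forallP => u; apply/forallP => v; rewrite !ffunE.
case: u => [[|[|[|u]]] Hu] //; case: v => [[|[|[|v]]] Hv] //=;
  rewrite ?inordK ?sv_inord; try lia; rewrite ?ltnn ?eqxx //= ?E01 ?E02 ?E12 ?eqxx ?andbT //=; try lia.
Qed.

Lemma lay_avoids (n : nat) (t : n.-1.-tuple bool) :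
  avoids (layp t) [:: 2; 3; 1] && avoids (layp t) [:: 3; 1; 2].
Proof.
have Hs : size t = n.-1 by rewrite size_tuple.
apply/andP; split.
- case: (boolP (avoids _ _)) => // /avoid_rel [a [b [c [/andP [Hab Hbc] Hc E1 E2 E3]]]].
  rewrite !sv_lay in E1 E2 E3; try lia.
  have [L1 _] := @layL t a b Hab (ltac:(lia)).
  have [L2 _] := @layL t a c (ltac:(lia)) (ltac:(lia)).
  rewrite L1 in E1; rewrite L2 in E2; move: E1 E2 => /= E1 E2; lia.
- case: (boolP (avoids _ _)) => // /avoid_rel [a [b [c [/andP [Hab Hbc] Hc E1 E2 E3]]]].
  rewrite !sv_lay in E1 E2 E3; try lia.
  have [L1 _] := @layL t a b Hab (ltac:(lia)).
  have [L2 _] := @layL t a c (ltac:(lia)) (ltac:(lia)).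
  have [L3 _] := @layL t b c Hbc (ltac:(lia)).
  rewrite L1 in E1; rewrite L2 in E2; rewrite L3 in E3; move: E1 E2 E3 => /= E1 E2 E3.
  have := st_le t a.
  have [B1 _] := @block t a b (ltac:(lia)) (ltac:(lia)) (ltac:(have := st_le t a; lia)) (ltac:(lia)).
  lia.
Qed.

Section Avoider.
Variables (n : nat) (s : 'S_n).
Hypothesis Hav1 : avoids s [:: 2; 3; 1].
Hypothesis Hav2 : avoids s [:: 3; 1; 2].
Local Notation v := (sv s).

Lemma v_neq x y : x < n -> y < n -> x != y -> v x != v y.
Proof. by move=> Hx Hy /eqP Hxy; apply/eqP => /sv_inj => /(_ Hx Hy). Qed.

Lemma no231 a b c : a < b -> b < c -> c < n -> v a < v b -> v c < v a -> False.
Proof.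
move=> Hab Hbc Hc H1 H2.
apply: (@no_pat n s 2 3 1 a b c) => //; try (by rewrite H1);
  by apply/negbTE; rewrite -leqNgt; lia.
Qed.

Lemma no312 a b c : a < b -> b < c -> c < n -> v b < v c -> v c < v a -> False.
Proof.
move=> Hab Hbc Hc H1 H2.
apply: (@no_pat n s 3 1 2 a b c) => //; try (by rewrite H1);
  by apply/negbTE; rewrite -leqNgt; lia.
Qed.

Lemma claimA k a c : k.+1 < n -> v k < v k.+1 -> a <= k -> k < c -> c < n -> v a < v c.
Proof.
move=> Hk Hasc Ha Hkc Hc.
case: (ltngtP (v a) (v c)) => // H; last first.
  by have := v_neq (ltac:(lia) : a < n) Hc (ltac:(lia) : a != c); rewrite H eqxx.
have Dkc : c > k.+1 -> v k != v c by move=> ?; apply: v_neq; lia.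
have Dak1 : a < k -> v a != v k.+1 by move=> ?; apply: v_neq; lia.
case: (ltngtP a k) => Hak; try lia; case: (ltngtP c k.+1) => Hck; try lia.
- have H1 : v k < v c.
    case: (ltngtP (v k) (v c)) => // H1; last by move: (Dkc Hck); rewrite H1 eqxx.
    by exfalso; apply: (@no231 k k.+1 c) => //; lia.
  have H2 : v a < v k.+1.
    case: (ltngtP (v a) (v k.+1)) => // H2; last by move: (Dak1 Hak); rewrite H2 eqxx.
    by exfalso; apply: (@no312 a k k.+1) => //; lia.
  by exfalso; apply: (@no231 a k.+1 c) => //; lia.
- by exfalso; subst c; apply: (@no312 a k k.+1) => //; lia.
- by exfalso; subst a; apply: (@no231 k k.+1 c) => //; lia.
- by subst a c; lia.
Qed.

Lemma chain i j : i < j -> (forall k, i <= k -> k < j -> v k.+1 < v k) -> v j < v i.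
Proof.
elim: j => [|j IH] // Hij H.
case: (ltngtP i j) => Hij'; try lia.
- apply: leq_trans (H j (ltnW Hij') (ltnSn j)) _.
  by apply: ltnW; apply: IH => // k H1 H2; apply: H; lia.
- by subst j; apply: H.
Qed.

Lemma nth_Dseq k : nth false (Dseq s) k = (k < n.-1) && (v k.+1 < v k).
Proof.
case: (ltnP k n.-1) => Hk; first by rewrite nth_mkseq.
by rewrite nth_default // size_mkseq.
Qed.

Lemma avL i j : i < j -> j < n ->
  (v i < v j) = (en (Dseq s) i < j) /\ (v j < v i) = ~~ (en (Dseq s) i < j).
Proof.
move=> Hij Hj; set b := Dseq s.
case: (ltnP (en b i) j) => H /=.
- set k := en b i.
  have Hk : i <= k by exact: en_ge.
  have Hf := en_false b i; rewrite -/k nth_Dseq in Hf.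
  have Hkn : k < n.-1 by lia.
  rewrite Hkn /= in Hf.
  have Hasc : v k < v k.+1.
    case: (ltngtP (v k) (v k.+1)) => //; first by rewrite Hf.
    by move/eqP; rewrite (negbTE (v_neq _ _ _)) //; lia.
  have := @claimA k i j (ltac:(lia)) Hasc Hk H Hj => H1.
  by rewrite H1 ltnNge ltnW.
- have H1 : v j < v i.
    apply: chain => // k H1 H2.
    have := en_true H1 (leq_trans H2 H); rewrite nth_Dseq => /andP [].
    by [].
  by rewrite H1 ltnNge ltnW.
Qed.

Lemma lay_Dt : layp (Dt s) = s.
Proof.
apply: perm_eq_order => i j; rewrite !laypE -!svE.
have Hs : size (Dseq s) = n.-1 by rewrite size_mkseq.
have Hi := ltn_ord i; have Hj := ltn_ord j.
case: (ltngtP (val i) (val j)) => H.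
- have [L1 _] := @layL (Dseq s) i j H (ltac:(lia)).
  have [A1 _] := avL H Hj.
  by rewrite /= L1 A1.
- have [_ L2] := @layL (Dseq s) j i H (ltac:(lia)).
  have [_ A2] := avL H Hi.
  by rewrite /= L2 A2.
- by rewrite H !ltnn.
Qed.

End Avoider.

Lemma des_map (n : nat) (s : 'S_n) :
  [seq is_des s k | k <- iota 0 n] = if n is 0 then [::] else Dseq s ++ [:: false].
Proof.
case: n s => [|m] s //.
rewrite (_ : iota 0 m.+1 = iota 0 m ++ [:: m]); last by rewrite -addn1 iotaD.
rewrite map_cat /Dseq /mkseq /=; congr (_ ++ _).
  apply/eq_in_map => k; rewrite mem_iota /= => Hk.
  by rewrite /is_des /sv ltnS Hk.
by rewrite /is_des ltnn.
Qed.

Lemma asc_map (n : nat) (s : 'S_n) :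
  [seq is_asc s k | k <- iota 0 n] = if n is 0 then [::] else map negb (Dseq s) ++ [:: false].
Proof.
case: n s => [|m] s //.
rewrite (_ : iota 0 m.+1 = iota 0 m ++ [:: m]); last by rewrite -addn1 iotaD.
rewrite map_cat /Dseq /mkseq /= -map_comp; congr (_ ++ _).
  apply/eq_in_map => k; rewrite mem_iota /= => Hk.
  rewrite /is_asc ltnS Hk /=.
  have Hne : sv s k != sv s k.+1 by apply/eqP => /sv_inj; lia.
  rewrite /sv in Hne *; case: ltngtP Hne => //.
by rewrite /is_asc ltnn.
Qed.

Local Open Scope ring_scope.

Section Weights.
Variables (R : comNzRingType) (p q y z : R).

Definition W (l : seq bool) : R :=
  p ^+ count negb l * q ^+ count id l * y ^+ mna (map negb l) * z ^+ mna l.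
Definition Wy (l : seq bool) : R :=
  p ^+ count negb l * q ^+ count id l * y ^+ mna (behead (map negb l)) * z ^+ mna l.
Definition Wz (l : seq bool) : R :=
  p ^+ count negb l * q ^+ count id l * y ^+ mna (map negb l) * z ^+ mna (behead l).

Lemma weightE (n : nat) (s : 'S_n) :
  p ^+ asc s * q ^+ des s * y ^+ MNA s * z ^+ MND s = W (Dseq s).
Proof.
have E1 : des s = count id (Dseq s).
  rewrite /des -(count_map _ id) /= (_ : map _ _ = [seq is_des s k | k <- iota 0 n]) //.
  rewrite des_map; case: n s => [|m] s; by rewrite ?count_cat /= ?addn0.
have E2 : asc s = count negb (Dseq s).
  rewrite /asc -(count_map _ id) /= (_ : map _ _ = [seq is_asc s k | k <- iota 0 n]) //.
  rewrite asc_map; case: n s {E1} => [|m] s; by rewrite ?count_cat /= ?addn0 ?count_map.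
have E3 : MNA s = mna (map negb (Dseq s)).
  rewrite /MNA (_ : \max_(_ | _) _ = Mx n (is_asc s)) // Mx_mna asc_map.
  by case: n s {E1 E2} => [|m] s; rewrite ?mna_cat_false.
have E4 : MND s = mna (Dseq s).
  rewrite /MND (_ : \max_(_ | _) _ = Mx n (is_des s)) // Mx_mna des_map.
  by case: n s {E1 E2 E3} => [|m] s; rewrite ?mna_cat_false.
by rewrite E1 E2 E3 E4.
Qed.

Lemma W_false l : W (false :: l) = p * y * Wy l.
Proof. rewrite /W /Wy map_cons ?mna_true /= ?add1n ?add0n !exprS; ring. Qed.
Lemma W_true l : W (true :: l) = q * z * Wz l.
Proof. rewrite /W /Wz map_cons ?mna_true /= ?add1n ?add0n !exprS; ring. Qed.
Lemma Wy_false l : Wy (false :: l) = p * W l.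
Proof. rewrite /W /Wy map_cons ?mna_true /= ?add1n ?add0n !exprS; ring. Qed.
Lemma Wy_true l : Wy (true :: l) = q * z * Wz l.
Proof. rewrite /Wz /Wy map_cons ?mna_true /= ?add1n ?add0n !exprS; ring. Qed.
Lemma Wz_false l : Wz (false :: l) = p * y * Wy l.
Proof. rewrite /Wz /Wy map_cons ?mna_true /= ?add1n ?add0n !exprS; ring. Qed.
Lemma Wz_true l : Wz (true :: l) = q * W l.
Proof. rewrite /W /Wz map_cons ?mna_true /= ?add1n ?add0n !exprS; ring. Qed.

Lemma sum_tuple0 (F : seq bool -> R) : \sum_(t : 0.-tuple bool) F t = F [::].
Proof.
rewrite (eq_bigr (fun _ => F [::])) => [|t _]; last by rewrite tuple0.
by rewrite sumr_const card_tuple.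
Qed.

Lemma sum_tuple_cons m (F : seq bool -> R) :
  \sum_(t : m.+1.-tuple bool) F t =
  \sum_(t : m.-tuple bool) F (true :: t) + \sum_(t : m.-tuple bool) F (false :: t).
Proof.
rewrite (reindex (fun pr : bool * m.-tuple bool => cons_tuple pr.1 pr.2)) /=.
  by rewrite -(pair_big predT predT (fun x (t : m.-tuple bool) => F (x :: t))) /= big_bool.
exists (fun t : m.+1.-tuple bool => (thead t, [tuple of behead t])) => [[x t] _ | t _] /=.
  by congr pair; apply: val_inj.
by apply: val_inj => /=; rewrite [in RHS](tuple_eta t).
Qed.

Definition TS (F : seq bool -> R) m := \sum_(t : m.-tuple bool) F t.

Lemma TSf_S m : TS W m.+1 = p * y * TS Wy m + q * z * TS Wz m.
Proof.
rewrite /TS sum_tuple_cons addrC !mulr_sumr; congr (_ + _); apply: eq_bigr => t _.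
  by rewrite W_false. by rewrite W_true.
Qed.
Lemma TSy_S m : TS Wy m.+1 = p * TS W m + q * z * TS Wz m.
Proof.
rewrite /TS sum_tuple_cons addrC !mulr_sumr; congr (_ + _); apply: eq_bigr => t _.
  by rewrite Wy_false. by rewrite Wy_true.
Qed.
Lemma TSz_S m : TS Wz m.+1 = p * y * TS Wy m + q * TS W m.
Proof.
rewrite /TS sum_tuple_cons addrC !mulr_sumr; congr (_ + _); apply: eq_bigr => t _.
  by rewrite Wz_false. by rewrite Wz_true.
Qed.

Lemma TS0 F : TS F 0 = F [::]. Proof. exact: sum_tuple0. Qed.

Lemma Gcoef_TS n : Gcoef p q y z n = TS W n.-1.
Proof.
rewrite /Gcoef (reindex (@layp n)) /=.
  rewrite (eq_bigl predT) => [|t]; last by rewrite lay_avoids.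
  by apply: eq_bigr => t _; rewrite weightE (_ : Dseq (layp t) = t) // -{2}(Dt_lay t).
exists (@Dt n) => [t _ | s]; first exact: Dt_lay.
by rewrite inE => /andP [H1 H2]; exact: lay_Dt.
Qed.

End Weights.

Lemma GdenE (R : comNzRingType) (p q y z : R) :
  Gden p q y z = 1 - (p^+2*y + q^+2*z + p*q*y*z)%:P * 'X^2 - ((p^+2*q + p*q^+2)*y*z)%:P * 'X^3.
Proof. rewrite /Gden. ring. Qed.
Lemma GdenC (R : comNzRingType) (p q y z : R) i :
  (Gden p q y z)`_i = if i == 0%N then 1 else if i == 2%N then - (p^+2*y + q^+2*z + p*q*y*z)
     else if i == 3%N then - ((p^+2*q + p*q^+2)*y*z) else 0.
Proof.
rewrite GdenE !coefB coef1 !coefCM !coefXn.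
by case: i => [|[|[|[|i]]]] /=; ring.
Qed.
Lemma GnumE (R : comNzRingType) (p q y z : R) :
  Gnum p q y z = 1 + 'X + (p*y - p^+2*y + q*z - q^+2*z - p*q*y*z)%:P * 'X^2
    + (p*q*y*z - p^+2*q*y*z - p*q^+2*y*z)%:P * 'X^3.
Proof. rewrite /Gnum. ring. Qed.
Lemma GnumC (R : comNzRingType) (p q y z : R) i :
  (Gnum p q y z)`_i = if i == 0%N then 1 else if i == 1%N then 1 else if i == 2%N then
    p*y - p^+2*y + q*z - q^+2*z - p*q*y*z
     else if i == 3%N then p*q*y*z - p^+2*q*y*z - p*q^+2*y*z else 0.
Proof.
rewrite GnumE !coefD coef1 coefX !coefCM !coefXn.
by case: i => [|[|[|[|i]]]] /=; ring.
Qed.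

Lemma TS_rec (R : comNzRingType) (p q y z : R) m :
  TS (W p q y z) m.+3 = (p^+2*y + q^+2*z + p*q*y*z) * TS (W p q y z) m.+1
     + ((p^+2*q + p*q^+2)*y*z) * TS (W p q y z) m.
Proof. rewrite !(TSf_S, TSy_S, TSz_S); ring. Qed.

Lemma TS_vals (R : comNzRingType) (p q y z : R) :
  [/\ TS (W p q y z) 0 = 1, TS (Wy p q y z) 0 = 1, TS (Wz p q y z) 0 = 1,
      TS (W p q y z) 1 = p * y + q * z &
      TS (W p q y z) 2 = p^+2*y + q^+2*z + 2 * p*q*y*z].
Proof.
have H0 : TS (W p q y z) 0 = 1 by rewrite TS0 /W /= !expr0 !mulr1.
have H1 : TS (Wy p q y z) 0 = 1 by rewrite TS0 /Wy /= !expr0 !mulr1.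
have H2 : TS (Wz p q y z) 0 = 1 by rewrite TS0 /Wz /= !expr0 !mulr1.
split => //.
- by rewrite TSf_S H1 H2 !mulr1.
- rewrite TSf_S TSy_S TSz_S H0 H1 H2; ring.
Qed.

Unset Implicit Arguments.
Set Strict Implicit.

Theorem theorem6 (R : comNzRingType) (p q y z : R) (n : nat) :
  \sum_(k < n.+1) Gcoef p q y z k * (Gden p q y z)`_(n - k) = (Gnum p q y z)`_n.
Proof.
have [V0 Vy Vz V1 V2] := TS_vals p q y z.
case: n => [|[|[|[|m]]]].
- by rewrite big_ord_recr big_ord0 /= GdenC GnumC Gcoef_TS /= V0 add0r mulr1.
- rewrite !big_ord_recr big_ord0 /= !GdenC GnumC !Gcoef_TS /= ?subSS ?subn0 /= V0; ring.
- rewrite !big_ord_recr big_ord0 /= !GdenC GnumC !Gcoef_TS /= ?subSS ?subn0 /= V0 V1; ring.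
- rewrite !big_ord_recr big_ord0 /= !GdenC GnumC !Gcoef_TS /= ?subSS ?subn0 /= V0 V1 V2; ring.
- do 4 rewrite big_ord_recr /=.
  rewrite big1 => [|k _]; last first.
    rewrite GdenC (_ : (m.+4 - k = (m - k).+4)%N) /=; first by rewrite mulr0.
    have := ltn_ord k; lia.
  have e1 : (m.+4 - m.+3 = 1)%N by lia.
  have e2 : (m.+4 - m.+2 = 2)%N by lia.
  have e3 : (m.+4 - m.+1 = 3)%N by lia.
  rewrite e1 e2 e3 subnn !GdenC GnumC !Gcoef_TS /=.
  rewrite (TS_rec p q y z m); ring.
Qed.
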